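(* In the setting below, there exist $K>0$ and $\hat\beta>0$ such that for all $\beta<\hat\beta$, $D,h\in\mathbb{R}$ and $N\ge2$, \[|p-p_-|\le\frac KN,\qquad |q-q_-|\le\frac KN.\]
   Context: Fix $S\ge1$ and let $X$ be standard Gaussian. For $b\ge0$ consider the system in $(p,q)$ $p=\mathbb{E}\big[\frac{\sum_{\gamma=1}^{S}\gamma^2\, 2\cosh[\gamma(\sqrt{q}bX+h)]e^{\gamma^2[D+\frac{b^2}{2}(p-q)]}}{1+\sum_{\gamma=1}^{S}2\cosh[\gamma(\sqrt{q}bX+h)]e^{\gamma^2[D+\frac{b^2}{2}(p-q)]}}\big]$, $q=\mathbb{E}\big[\big(\frac{\sum_{\gamma=1}^{S}\gamma\, 2\sinh[\gamma(\sqrt{q}bX+h)]e^{\gamma^2[D+\frac{b^2}{2}(p-q)]}}{1+\sum_{\gamma=1}^{S}2\cosh[\gamma(\sqrt{q}bX+h)]e^{\gamma^2[D+\frac{b^2}{2}(p-q)]}}\big)^2\big]$, which for $b$ below some threshold $\tilde\beta>0$ has a unique solution; $\beta<\tilde\beta$ is assumed. Let $(p,q)$ be the solution with $b=\beta$, let $\beta_-=\beta\sqrt{(N-1)/N}$ (so $\beta_-/\sqrt{N-1}=\beta/\sqrt N$), and let $(p_-,q_-)$ be the solution with $b=\beta_-$. *)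

(* Defs.v *)
From Stdlib Require Import Reals Lra.
From Coquelicot Require Import Coquelicot.
Open Scope R_scope.

Fixpoint sum_spins (S : nat) (g : R -> R) : R :=
  match S with
  | O => 0
  | Datatypes.S S' => sum_spins S' g + g (INR S)
  end.

Definition gauss (x : R) : R := exp (- (x ^ 2) / 2) / sqrt (2 * PI).

Definition fld (b q h x gamma : R) : R := gamma * (sqrt q * b * x + h).

Definition efac (b D p q gamma : R) : R :=
  exp (gamma ^ 2 * (D + b ^ 2 / 2 * (p - q))).

Definition Zden (S : nat) (b D h p q x : R) : R :=
  1 + sum_spins S (fun g => 2 * cosh (fld b q h x g) * efac b D p q g).

Definition numP (S : nat) (b D h p q x : R) : R :=
  sum_spins S (fun g => g ^ 2 * (2 * cosh (fld b q h x g)) * efac b D p q g).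

Definition numQ (S : nat) (b D h p q x : R) : R :=
  sum_spins S (fun g => g * (2 * sinh (fld b q h x g)) * efac b D p q g).

(* (p,q) solves the fixed-point system with parameter b; the Gaussian
   expectations E[f(X)] are the (convergent) improper integrals
   int_{-oo}^{+oo} f(x) gauss(x) dx. *)
Definition is_solution (S : nat) (b D h p q : R) : Prop :=
  is_RInt_gen (fun x => gauss x * (numP S b D h p q x / Zden S b D h p q x))
    (Rbar_locally m_infty) (Rbar_locally p_infty) p /\
  is_RInt_gen (fun x => gauss x * (numQ S b D h p q x / Zden S b D h p q x) ^ 2)
    (Rbar_locally m_infty) (Rbar_locally p_infty) q.

Definition is_unique_solution (S : nat) (b D h p q : R) : Prop :=
  is_solution S b D h p q /\
  forall p' q', is_solution S b D h p' q' -> p' = p /\ q' = q.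

(* Main.v *)
Require Import Defs.
From Stdlib Require Import Reals Lra Lia.
From Coquelicot Require Import Coquelicot.
Open Scope R_scope.

Lemma gen_lim (f : R -> R) (l : R) :
  is_RInt_gen f (Rbar_locally m_infty) (Rbar_locally p_infty) l ->
  is_lim_seq (fun n => RInt f (- INR n) (INR n)) l.
Proof.
  intros H.
  assert (Hs : filterlim (fun n : nat => (- INR n, INR n)) eventually
     (filter_prod (Rbar_locally m_infty) (Rbar_locally p_infty))).
  { apply filterlim_pair.
    - pose proof (proj1 (is_lim_seq_opp _ _) is_lim_seq_INR) as K. exact K.
    - exact is_lim_seq_INR. }
  pose proof (filterlimi_comp _ _ _ _ _ _ _ _ Hs H) as H2. simpl in H2.
  unfold is_lim_seq. apply (filterlim_locally (fun n => RInt f (- INR n) (INR n)) l).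
  intros eps.
  pose proof (proj1 (filterlimi_locally _ _) H2 eps) as H3.
  revert H3. apply filter_imp. intros n [z [Hz Hb]].
  rewrite (is_RInt_unique _ _ _ _ Hz). exact Hb.
Qed.

Lemma cont_ex (f : R -> R) a b : (forall x, continuous f x) -> ex_RInt f a b.
Proof. intros H; apply (ex_RInt_continuous (V:=R_CompleteNormedModule)); intros; apply H. Qed.

Lemma cont_rat x : continuous (fun x => / (1 + x ^ 2)) x.
Proof.
  apply (ex_derive_continuous (K:=R_AbsRing) (V:=R_NormedModule)). auto_derive. nra.
Qed.

Lemma RInt_rat (n : nat) : RInt (fun x => / (1 + x ^ 2)) (- INR n) (INR n) <= PI.
Proof.
  rewrite (is_RInt_unique _ _ _ (atan (INR n) - atan (- INR n))).
  - pose proof (atan_bound (INR n)); pose proof (atan_bound (- INR n)); lra.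
  - apply (is_RInt_derive atan (fun x => / (1 + x ^ 2))).
    + intros x _. apply is_derive_Reals, derivable_pt_lim_atan.
    + intros x _. apply cont_rat.
Qed.

Lemma master (f : R -> R) (c : R) (n : nat) :
  (forall x, continuous f x) -> (forall x, Rabs (f x) <= c / (1 + x ^ 2)) ->
  Rabs (RInt f (- INR n) (INR n)) <= c * PI.
Proof.
  intros Hc Hb.
  assert (Hn : - INR n <= INR n) by (pose proof (pos_INR n); lra).
  assert (Eg : RInt (fun x => c / (1 + x^2)) (- INR n) (INR n)
     = c * RInt (fun x => / (1 + x ^ 2)) (- INR n) (INR n)).
  { rewrite <- (RInt_scal (fun x => / (1 + x ^ 2))). apply RInt_ext. intros. reflexivity.
    apply cont_ex, cont_rat. }
  assert (Hc0 : 0 <= c).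
  { pose proof (Hb 0). pose proof (Rabs_pos (f 0)).
    replace (c / (1 + 0^2)) with c in H by (field). lra. }
  assert (Eg2 : RInt (fun x => - (c / (1 + x^2))) (- INR n) (INR n)
     = - (c * RInt (fun x => / (1 + x ^ 2)) (- INR n) (INR n))).
  { rewrite <- Eg. apply (RInt_opp (fun x => c / (1 + x^2))).
    apply cont_ex. intros x. apply (continuous_mult (fun _ => c)). apply continuous_const. apply cont_rat. }
  assert (exg : forall s, ex_RInt (fun x => s * (/ (1 + x^2))) (- INR n) (INR n)).
  { intros s. apply cont_ex. intros x. apply (continuous_mult (fun _ => s)). apply continuous_const. apply cont_rat. }
  pose proof (RInt_rat n).
  apply Rabs_le; split.
  - apply Rle_trans with (RInt (fun x => - (c / (1 + x^2))) (- INR n) (INR n)).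
    + rewrite Eg2. nra.
    + apply RInt_le; auto.
      * apply (ex_RInt_ext (V:=R_NormedModule) (fun x => (-c) * / (1 + x^2))); [intros x _; unfold Rdiv; simpl; ring | apply exg].
      * apply cont_ex; auto.
      * intros x _. pose proof (Hb x) as H0. apply Rabs_le_between in H0. lra.
  - apply Rle_trans with (RInt (fun x => (c / (1 + x^2))) (- INR n) (INR n)).
    + apply RInt_le; auto.
      * apply cont_ex; auto.
      * apply exg.
      * intros x _. pose proof (Hb x) as H0. apply Rabs_le_between in H0. lra.
    + rewrite Eg. nra.
Qed.

Lemma lim_bound (u : nat -> R) (l B : R) : is_lim_seq u l -> (forall n, Rabs (u n) <= B) -> Rabs l <= B.
Proof.
  intros Hu Hb.
  pose proof (is_lim_seq_le (fun n => Rabs (u n)) (fun _ => B) (Rabs l) B Hb (is_lim_seq_abs _ _ Hu) (is_lim_seq_const B)).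
  exact H.
Qed.

Lemma lim_ge0 (u : nat -> R) (l : R) : is_lim_seq u l -> (forall n, 0 <= u n) -> 0 <= l.
Proof.
  intros Hu Hb.
  exact (is_lim_seq_le (fun _ => 0) u 0 l Hb (is_lim_seq_const 0) Hu).
Qed.

Lemma dcy c g w y : is_derive (fun y => c * (2 * cosh (g*y)) * exp (g^2*w)) y (c * g * (2 * sinh (g*y)) * exp (g^2*w)).
Proof. unfold cosh, sinh. auto_derive; [auto|]; try (replace (g * (g * 1) * w) with (g^2*w) by ring); field. Qed.
Lemma dsy c g w y : is_derive (fun y => c * (2 * sinh (g*y)) * exp (g^2*w)) y (c * g * (2 * cosh (g*y)) * exp (g^2*w)).
Proof. unfold cosh, sinh. auto_derive; [auto|]; try (replace (g * (g * 1) * w) with (g^2*w) by ring); field. Qed.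
Lemma dcw c g w y : is_derive (fun w => c * (2 * cosh (g*y)) * exp (g^2*w)) w (c * g^2 * (2 * cosh (g*y)) * exp (g^2*w)).
Proof. auto_derive; [auto|]; try (replace (g * (g * 1) * w) with (g^2*w) by ring); field. Qed.
Lemma dsw c g w y : is_derive (fun w => c * (2 * sinh (g*y)) * exp (g^2*w)) w (c * g^2 * (2 * sinh (g*y)) * exp (g^2*w)).
Proof. auto_derive; [auto|]; try (replace (g * (g * 1) * w) with (g^2*w) by ring); field. Qed.

Lemma sum_derive S (F dF : R -> R -> R) y :
  (forall g, is_derive (fun y => F g y) y (dF g y)) ->
  is_derive (fun y => sum_spins S (fun g => F g y)) y (sum_spins S (fun g => dF g y)).
Proof.
  intros H. induction S as [|S IH]; simpl.
  - apply (is_derive_const (K:=R_AbsRing) (V:=R_NormedModule) 0 y).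
  - apply (is_derive_plus (K:=R_AbsRing) (V:=R_NormedModule) (fun y => sum_spins S (fun g => F g y)) (fun y => F (INR (Datatypes.S S)) y)); auto.
Qed.

Lemma sum_le S (f g : R -> R) :
  (forall k, (1 <= k <= S)%nat -> f (INR k) <= g (INR k)) -> sum_spins S f <= sum_spins S g.
Proof.
  induction S as [|S IH]; cbn [sum_spins]; intros H.
  - lra.
  - apply Rplus_le_compat. apply IH. intros k Hk. apply H. lia.
    apply H. lia.
Qed.

Lemma sum_scal S c (f : R -> R) : sum_spins S (fun g => c * f g) = c * sum_spins S f.
Proof. induction S; cbn [sum_spins]. ring. rewrite IHS. ring. Qed.

Lemma sum_ext S (f g : R -> R) :
  (forall k, (1 <= k <= S)%nat -> f (INR k) = g (INR k)) -> sum_spins S f = sum_spins S g.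
Proof.
  induction S as [|S IH]; cbn [sum_spins]; intros H.
  - lra.
  - rewrite IH. rewrite H. auto. lia. intros k Hk. apply H. lia.
Qed.

Lemma sinh_le_cosh u : Rabs (sinh u) <= cosh u.
Proof. unfold sinh, cosh. pose proof (exp_pos u); pose proof (exp_pos (-u)).
  apply Rabs_le; split; lra. Qed.
Lemma cosh_pos u : 0 < cosh u.
Proof. unfold cosh. pose proof (exp_pos u); pose proof (exp_pos (-u)). lra. Qed.

Definition Cf S k y w := sum_spins S (fun g => g^k * (2*cosh(g*y)) * exp(g^2*w)).
Definition Sf S k y w := sum_spins S (fun g => g^k * (2*sinh(g*y)) * exp(g^2*w)).
Definition Zf S y w := 1 + Cf S 0 y w.
Definition PhiP S y w := Cf S 2 y w / Zf S y w.
Definition PhiQ S y w := Sf S 1 y w / Zf S y w.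

Lemma Cf0_ge S y w : 0 <= Cf S 0 y w.
Proof.
  unfold Cf. apply Rle_trans with (sum_spins S (fun _ => 0)).
  - clear. induction S; cbn [sum_spins]; lra.
  - apply sum_le. intros k Hk. pose proof (cosh_pos (INR k * y)).
    pose proof (exp_pos (INR k ^ 2 * w)). rewrite pow_O. apply Rmult_le_pos; lra.
Qed.

Lemma Zf_pos S y w : 1 <= Zf S y w.
Proof. unfold Zf. pose proof (Cf0_ge S y w). lra. Qed.

Lemma gk_bound S k (g : nat) : (1 <= g <= S)%nat -> 0 <= INR g ^ k <= INR S ^ k.
Proof.
  intros H. assert (1 <= INR g) by (apply (le_INR 1); lia).
  assert (INR g <= INR S) by (apply le_INR; lia).
  split. apply pow_le; lra. apply pow_incr; lra.
Qed.

Lemma Cf_bound S k y w : 0 <= Cf S k y w <= INR S ^ k * Cf S 0 y w.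
Proof.
  unfold Cf. rewrite <- sum_scal. split.
  - apply Rle_trans with (sum_spins S (fun _ => 0)).
    + clear. induction S; cbn [sum_spins]; lra.
    + apply sum_le. intros g Hg. pose proof (gk_bound S k g Hg). pose proof (cosh_pos (INR g * y)).
      pose proof (exp_pos (INR g ^ 2 * w)). apply Rmult_le_pos; [|lra]. nra.
  - apply sum_le. intros g Hg. pose proof (gk_bound S k g Hg). pose proof (cosh_pos (INR g * y)).
    pose proof (exp_pos (INR g ^ 2 * w)). simpl (INR g ^ 0).
    assert (0 <= 2 * cosh (INR g * y) * exp (INR g ^ 2 * w)) by nra.
    replace (INR S ^ k * (1 * (2 * cosh (INR g * y)) * exp (INR g ^ 2 * w))) with
      (INR S ^ k * (2 * cosh (INR g * y) * exp (INR g ^ 2 * w))) by ring.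
    replace (INR g ^ k * (2 * cosh (INR g * y)) * exp (INR g ^ 2 * w)) with
      (INR g ^ k * (2 * cosh (INR g * y) * exp (INR g ^ 2 * w))) by ring.
    apply Rmult_le_compat_r; lra.
Qed.

Lemma Sf_bound S k y w : Rabs (Sf S k y w) <= INR S ^ k * Cf S 0 y w.
Proof.
  unfold Sf, Cf. rewrite <- sum_scal. apply Rabs_le. split.
  - match goal with |- - sum_spins S ?F <= _ => 
      assert (Ho : sum_spins S (fun g => - F g) = - sum_spins S F) by
        (rewrite <- (Rmult_1_l (sum_spins S F)), Ropp_mult_distr_l, <- sum_scal; apply sum_ext; intros; ring) end.
    rewrite <- Ho. apply sum_le.
    intros g Hg. pose proof (gk_bound S k g Hg). pose proof (cosh_pos (INR g * y)).
    pose proof (exp_pos (INR g ^ 2 * w)). pose proof (sinh_le_cosh (INR g * y)) as Hs.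
    apply Rabs_le_between in Hs. simpl (INR g ^ 0).
    set (e := exp (INR g ^ 2 * w)) in *. set (c := cosh (INR g * y)) in *.
    set (sn := sinh (INR g * y)) in *. set (a := INR g ^ k) in *. set (b := INR S ^ k) in *.
    assert (a * sn >= - (b * c)) by nra. nra.
  - apply sum_le.
    intros g Hg. pose proof (gk_bound S k g Hg). pose proof (cosh_pos (INR g * y)).
    pose proof (exp_pos (INR g ^ 2 * w)). pose proof (sinh_le_cosh (INR g * y)) as Hs.
    apply Rabs_le_between in Hs. simpl (INR g ^ 0).
    set (e := exp (INR g ^ 2 * w)) in *. set (c := cosh (INR g * y)) in *.
    set (sn := sinh (INR g * y)) in *. set (a := INR g ^ k) in *. set (b := INR S ^ k) in *.
    assert (a * sn <= b * c) by nra. nra.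
Qed.

Lemma Cf_absZ S k y w : Rabs (Cf S k y w) <= INR S ^ k * Zf S y w.
Proof.
  pose proof (Cf_bound S k y w). pose proof (Cf0_ge S y w). unfold Zf.
  assert (0 <= INR S ^ k) by (apply pow_le, pos_INR).
  rewrite Rabs_pos_eq by lra. nra.
Qed.
Lemma Sf_absZ S k y w : Rabs (Sf S k y w) <= INR S ^ k * Zf S y w.
Proof.
  pose proof (Sf_bound S k y w). pose proof (Cf0_ge S y w). unfold Zf.
  assert (0 <= INR S ^ k) by (apply pow_le, pos_INR). nra.
Qed.

Lemma is_derive_eq (f : R -> R) x l l' : is_derive f x l -> l = l' -> is_derive f x l'.
Proof. intros H ->; exact H. Qed.

Lemma dCy S k y w : is_derive (fun y => Cf S k y w) y (Sf S (Datatypes.S k) y w).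
Proof.
  unfold Cf, Sf. eapply is_derive_eq.
  apply (sum_derive S (fun g y => g^k * (2*cosh(g*y)) * exp(g^2*w)) (fun g y => g^k * g * (2*sinh(g*y)) * exp(g^2*w))).
  intros g. apply dcy. apply sum_ext. intros. simpl. ring.
Qed.
Lemma dSy S k y w : is_derive (fun y => Sf S k y w) y (Cf S (Datatypes.S k) y w).
Proof.
  unfold Cf, Sf. eapply is_derive_eq.
  apply (sum_derive S (fun g y => g^k * (2*sinh(g*y)) * exp(g^2*w)) (fun g y => g^k * g * (2*cosh(g*y)) * exp(g^2*w))).
  intros g. apply dsy. apply sum_ext. intros. simpl. ring.
Qed.
Lemma dCw S k y w : is_derive (fun w => Cf S k y w) w (Cf S (Datatypes.S (Datatypes.S k)) y w).
Proof.
  unfold Cf, Sf. eapply is_derive_eq.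
  apply (sum_derive S (fun g w => g^k * (2*cosh(g*y)) * exp(g^2*w)) (fun g w => g^k * g^2 * (2*cosh(g*y)) * exp(g^2*w))).
  intros g. apply dcw. apply sum_ext. intros. simpl. ring.
Qed.
Lemma dSw S k y w : is_derive (fun w => Sf S k y w) w (Sf S (Datatypes.S (Datatypes.S k)) y w).
Proof.
  unfold Cf, Sf. eapply is_derive_eq.
  apply (sum_derive S (fun g w => g^k * (2*sinh(g*y)) * exp(g^2*w)) (fun g w => g^k * g^2 * (2*sinh(g*y)) * exp(g^2*w))).
  intros g. apply dsw. apply sum_ext. intros. simpl. ring.
Qed.

Lemma quot_bound A A' B B' a a' b' : 0 < B -> Rabs A <= a * B -> Rabs A' <= a' * B ->
  Rabs B' <= b' * B -> Rabs ((A' * B - A * B') / B ^ 2) <= a' + a * b'.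
Proof.
  intros HB H1 H2 H3.
  assert (E : (A' * B - A * B') / B ^ 2 = A' / B - (A / B) * (B' / B)) by (field; lra).
  rewrite E.
  assert (K1 : Rabs (A / B) <= a). { rewrite Rabs_div by lra. rewrite (Rabs_pos_eq B) by lra.
    apply Rmult_le_reg_r with B; auto. field_simplify; lra. }
  assert (K2 : Rabs (A' / B) <= a'). { rewrite Rabs_div by lra. rewrite (Rabs_pos_eq B) by lra.
    apply Rmult_le_reg_r with B; auto. field_simplify; lra. }
  assert (K3 : Rabs (B' / B) <= b'). { rewrite Rabs_div by lra. rewrite (Rabs_pos_eq B) by lra.
    apply Rmult_le_reg_r with B; auto. field_simplify; lra. }
  eapply Rle_trans. apply Rabs_triang. rewrite Rabs_Ropp, Rabs_mult.
  pose proof (Rabs_pos (A/B)); pose proof (Rabs_pos (B'/B)). nra.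
Qed.

Lemma lip1 (f df : R -> R) K a b : (forall x, is_derive f x (df x)) -> (forall x, Rabs (df x) <= K) ->
  Rabs (f b - f a) <= K * Rabs (b - a).
Proof.
  intros Hd Hb.
  destruct (MVT_gen f a b df) as [c [_ Hc]].
  - intros; apply Hd.
  - intros x _. apply continuity_pt_filterlim.
    apply (ex_derive_continuous (K:=R_AbsRing) (V:=R_NormedModule)). eexists; apply Hd.
  - rewrite Hc, Rabs_mult. apply Rmult_le_compat_r. apply Rabs_pos. apply Hb.
Qed.

Lemma dZy S y w : is_derive (fun y => Zf S y w) y (Sf S 1 y w).
Proof.
  unfold Zf. eapply is_derive_eq.
  apply (is_derive_plus (K:=R_AbsRing) (V:=R_NormedModule) (fun _ => 1) (fun y => Cf S 0 y w)).
  apply is_derive_const. apply dCy. apply (plus_zero_l (G:=R_AbelianGroup)).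
Qed.
Lemma dZw S y w : is_derive (fun w => Zf S y w) w (Cf S 2 y w).
Proof.
  unfold Zf. eapply is_derive_eq.
  apply (is_derive_plus (K:=R_AbsRing) (V:=R_NormedModule) (fun _ => 1) (fun w => Cf S 0 y w)).
  apply is_derive_const. apply dCw. apply (plus_zero_l (G:=R_AbelianGroup)).
Qed.

Definition Lc S := 2 * INR S ^ 4.

Lemma pows S : (1 <= S)%nat -> 1 <= INR S /\ INR S <= INR S ^ 2 /\ INR S ^ 2 <= INR S ^ 3 /\ INR S ^ 3 <= INR S ^ 4.
Proof. intros H. assert (1 <= INR S) by (apply (le_INR 1); lia). simpl. repeat split; nra. Qed.

Lemma lip2 (F : R -> R -> R) (dy dw : R -> R -> R) K :
  (forall y w, is_derive (fun y => F y w) y (dy y w)) ->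
  (forall y w, is_derive (fun w => F y w) w (dw y w)) ->
  (forall y w, Rabs (dy y w) <= K) -> (forall y w, Rabs (dw y w) <= K) ->
  forall y w y' w', Rabs (F y w - F y' w') <= K * (Rabs (y - y') + Rabs (w - w')).
Proof.
  intros H1 H2 H3 H4 y w y' w'.
  pose proof (lip1 (fun y => F y w) (fun y => dy y w) K y' y (fun x => H1 x w) (fun x => H3 x w)).
  pose proof (lip1 (fun w => F y' w) (fun w => dw y' w) K w' w (H2 y') (H4 y')).
  simpl in *.
  replace (F y w - F y' w') with ((F y w - F y' w) + (F y' w - F y' w')) by ring.
  eapply Rle_trans. apply Rabs_triang. lra.
Qed.

Lemma Zne S y w : Zf S y w <> 0.
Proof. pose proof (Zf_pos S y w); lra. Qed.

Lemma lipP S : (1 <= S)%nat -> forall y w y' w',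
  Rabs (PhiP S y w - PhiP S y' w') <= Lc S * (Rabs (y - y') + Rabs (w - w')).
Proof.
  intros HS. destruct (pows S HS) as [s1 [s2 [s3 s4]]].
  apply (lip2 (PhiP S)
    (fun y w => (Sf S 3 y w * Zf S y w - Cf S 2 y w * Sf S 1 y w) / Zf S y w ^ 2)
    (fun y w => (Cf S 4 y w * Zf S y w - Cf S 2 y w * Cf S 2 y w) / Zf S y w ^ 2)).
  - intros y w. unfold PhiP. apply (is_derive_div (fun y => Cf S 2 y w) (fun y => Zf S y w)).
    apply dCy. apply dZy. apply Zne.
  - intros y w. unfold PhiP. apply (is_derive_div (fun w => Cf S 2 y w) (fun w => Zf S y w)).
    apply dCw. apply dZw. apply Zne.
  - intros y w. eapply Rle_trans. apply quot_bound.
    pose proof (Zf_pos S y w); lra. apply Cf_absZ. apply Sf_absZ. apply Sf_absZ.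
    unfold Lc. simpl in *. nra.
  - intros y w. eapply Rle_trans. apply quot_bound.
    pose proof (Zf_pos S y w); lra. apply Cf_absZ. apply Cf_absZ. apply Cf_absZ.
    unfold Lc. simpl in *. nra.
Qed.

Lemma lipQ S : (1 <= S)%nat -> forall y w y' w',
  Rabs (PhiQ S y w - PhiQ S y' w') <= Lc S * (Rabs (y - y') + Rabs (w - w')).
Proof.
  intros HS. destruct (pows S HS) as [s1 [s2 [s3 s4]]].
  apply (lip2 (PhiQ S)
    (fun y w => (Cf S 2 y w * Zf S y w - Sf S 1 y w * Sf S 1 y w) / Zf S y w ^ 2)
    (fun y w => (Sf S 3 y w * Zf S y w - Sf S 1 y w * Cf S 2 y w) / Zf S y w ^ 2)).
  - intros y w. unfold PhiQ. apply (is_derive_div (fun y => Sf S 1 y w) (fun y => Zf S y w)).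
    apply dSy. apply dZy. apply Zne.
  - intros y w. unfold PhiQ. apply (is_derive_div (fun w => Sf S 1 y w) (fun w => Zf S y w)).
    apply dSw. apply dZw. apply Zne.
  - intros y w. eapply Rle_trans. apply quot_bound.
    pose proof (Zf_pos S y w); lra. apply Sf_absZ. apply Cf_absZ. apply Sf_absZ.
    unfold Lc. simpl in *. nra.
  - intros y w. eapply Rle_trans. apply quot_bound.
    pose proof (Zf_pos S y w); lra. apply Sf_absZ. apply Sf_absZ. apply Cf_absZ.
    unfold Lc. simpl in *. nra.
Qed.

Lemma PhiP_bound S y w : 0 <= PhiP S y w <= INR S ^ 2.
Proof.
  unfold PhiP. pose proof (Cf_bound S 2 y w). pose proof (Zf_pos S y w).
  pose proof (Cf0_ge S y w). unfold Zf in *.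
  assert (0 <= INR S ^ 2) by (apply pow_le, pos_INR).
  split. apply Rmult_le_pos. lra. apply Rlt_le, Rinv_0_lt_compat; lra.
  apply Rmult_le_reg_r with (1 + Cf S 0 y w). lra. field_simplify; nra.
Qed.

Lemma PhiQ_bound S y w : Rabs (PhiQ S y w) <= INR S.
Proof.
  unfold PhiQ. pose proof (Sf_absZ S 1 y w). pose proof (Zf_pos S y w).
  rewrite Rabs_div by lra. rewrite (Rabs_pos_eq (Zf S y w)) by lra.
  apply Rmult_le_reg_r with (Zf S y w). lra. field_simplify; try lra; try (simpl in H; lra).
Qed.

Lemma PhiP_cont S w y : continuous (fun y => PhiP S y w) y.
Proof.
  apply (ex_derive_continuous (K:=R_AbsRing) (V:=R_NormedModule)). eexists.
  unfold PhiP. apply (is_derive_div (fun y => Cf S 2 y w) (fun y => Zf S y w)).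
  apply dCy. apply dZy. apply Zne.
Qed.
Lemma PhiQ_cont S w y : continuous (fun y => PhiQ S y w) y.
Proof.
  apply (ex_derive_continuous (K:=R_AbsRing) (V:=R_NormedModule)). eexists.
  unfold PhiQ. apply (is_derive_div (fun y => Sf S 1 y w) (fun y => Zf S y w)).
  apply dSy. apply dZy. apply Zne.
Qed.

Lemma gauss_pos x : 0 < gauss x.
Proof.
  unfold gauss. apply Rdiv_lt_0_compat. apply exp_pos. apply sqrt_lt_R0. pose proof PI_RGT_0; lra.
Qed.

Lemma gauss_bound x : gauss x * (1 + x^2)^2 <= 16.
Proof.
  unfold gauss.
  assert (Hs : 1 <= sqrt (2 * PI)).
  { rewrite <- sqrt_1. apply sqrt_le_1_alt. pose proof PI_RGT_0. pose proof PI2_3_2. lra. }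
  assert (He : exp (x^2/2) = exp (x^2/4) * exp (x^2/4)) by (rewrite <- exp_plus; f_equal; field).
  pose proof (exp_ineq1_le (x^2/4)).
  assert (Hx2 : 0 <= x^2) by nra.
  assert (H1 : (1 + x^2/4)^2 <= exp (x^2/2)) by (rewrite He; nra).
  assert (E : exp (- x^2/2) = / exp (x^2/2)) by (rewrite <- exp_Ropp; f_equal; field).
  rewrite E. pose proof (exp_pos (x^2/2)).
  assert (H2 : (1 + x^2)^2 <= 16 * (1 + x^2/4)^2) by nra.
  apply Rle_trans with ((1 + x^2)^2 / exp (x^2/2)).
  - unfold Rdiv. pose proof (sqrt_lt_R0 (2*PI)).
    assert (0 <= (1 + x ^ 2) ^ 2 * / exp (x ^ 2 / 2)) by (apply Rmult_le_pos; [nra | apply Rlt_le, Rinv_0_lt_compat; lra]).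
    assert (/ sqrt (2 * PI) <= 1) by (rewrite <- Rinv_1; apply Rinv_le_contravar; lra).
    assert (0 < / sqrt (2 * PI)) by (apply Rinv_0_lt_compat; lra).
    replace (/ exp (x ^ 2 / 2) * / sqrt (2 * PI) * (1 + x ^ 2) ^ 2) with
      ((1 + x ^ 2) ^ 2 * / exp (x ^ 2 / 2) * / sqrt (2 * PI)) by ring.
    nra.
  - apply Rmult_le_reg_r with (exp (x^2/2)). lra. replace ((1 + x^2)^2 / exp (x^2/2) * exp (x^2/2)) with ((1+x^2)^2) by (field; lra). nra.
Qed.

Lemma gauss_rat x k : Rabs k <= 1 + x^2 -> gauss x * Rabs k <= 16 / (1 + x^2).
Proof.
  intros H. pose proof (gauss_bound x). pose proof (gauss_pos x).
  assert (0 < 1 + x^2) by nra.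
  apply Rmult_le_reg_r with (1 + x^2). lra.
  replace (16 / (1 + x^2) * (1 + x^2)) with 16 by (field; lra).
  apply Rle_trans with (gauss x * (1 + x^2) * (1 + x^2)).
  apply Rmult_le_compat_r. lra. apply Rmult_le_compat_l; lra. nra.
Qed.

Lemma gauss_cont x : continuous gauss x.
Proof.
  apply (ex_derive_continuous (K:=R_AbsRing) (V:=R_NormedModule)). unfold gauss.
  auto_derive. pose proof (sqrt_lt_R0 (2 * PI)). pose proof PI_RGT_0. lra.
Qed.

Lemma cs_alg A B C : 0 <= A -> 0 <= B -> (forall l, 0 <= l^2 * A - 2 * l * C + B) ->
  (sqrt A - sqrt B)^2 <= A - 2 * C + B.
Proof.
  intros HA HB H.
  assert (HC : C <= sqrt A * sqrt B).
  { destruct (Rle_lt_dec C 0) as [Hc|Hc].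
    - pose proof (sqrt_pos A); pose proof (sqrt_pos B). nra.
    - destruct (Req_dec A 0) as [HA0|HA0].
      + specialize (H ((B+1)/(2*C))). rewrite HA0 in H.
        replace (((B + 1) / (2 * C)) ^ 2 * 0 - 2 * ((B + 1) / (2 * C)) * C + B) with (-1) in H
          by (field; lra). lra.
      + specialize (H (C/A)).
        replace ((C / A) ^ 2 * A - 2 * (C / A) * C + B) with (B - C^2/A) in H by (field; lra).
        assert (C^2 <= A * B).
        { apply Rmult_le_reg_r with (/A). apply Rinv_0_lt_compat; lra.
          replace (C^2 * /A) with (C^2/A) by (unfold Rdiv; ring).
          replace (A * B * / A) with B by (field; lra). lra. }
        rewrite <- sqrt_mult by lra. rewrite <- (sqrt_pow2 C) by lra.
        apply sqrt_le_1_alt. lra. }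
  replace ((sqrt A - sqrt B)^2) with (sqrt A * sqrt A + sqrt B * sqrt B - 2 * (sqrt A * sqrt B)) by ring.
  rewrite !sqrt_sqrt by lra. lra.
Qed.

Definition cont (f : R -> R) := forall x, continuous f x.

Lemma cont_mul f g : cont f -> cont g -> cont (fun x => f x * g x).
Proof. intros Hf Hg x. apply (continuous_mult (K:=R_AbsRing) f g); auto. Qed.
Lemma cont_plus f g : cont f -> cont g -> cont (fun x => f x + g x).
Proof. intros Hf Hg x. apply (continuous_plus (V:=R_NormedModule) f g); auto. Qed.
Lemma cont_const c : cont (fun _ => c).
Proof. intros x. apply continuous_const. Qed.
Lemma cont_id : cont (fun x => x).
Proof. intros x. apply continuous_id. Qed.
Lemma cont_minus f g : cont f -> cont g -> cont (fun x => f x - g x).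
Proof. intros Hf Hg. unfold Rminus. apply cont_plus; auto.
  apply (cont_mul (fun _ => -1) g) in Hg. intros x. eapply continuous_ext. 2: apply Hg.
  intros; simpl; ring. apply cont_const. Qed.
Lemma cont_sq f : cont f -> cont (fun x => f x ^ 2).
Proof. intros Hf. intros x. eapply continuous_ext. 2: apply (cont_mul f f Hf Hf). intros; simpl; ring. Qed.

Lemma RInt_lin3 (u v w : R -> R) a b c1 c2 c3 : ex_RInt u a b -> ex_RInt v a b -> ex_RInt w a b ->
  RInt (fun x => c1 * u x + c2 * v x + c3 * w x) a b = c1 * RInt u a b + c2 * RInt v a b + c3 * RInt w a b.
Proof.
  intros Hu Hv Hw. apply is_RInt_unique.
  apply (is_RInt_plus (fun x => c1 * u x + c2 * v x) (fun x => c3 * w x)).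
  apply (is_RInt_plus (fun x => c1 * u x) (fun x => c2 * v x)).
  apply (is_RInt_scal u). apply (RInt_correct (V:=R_CompleteNormedModule)); auto.
  apply (is_RInt_scal v). apply (RInt_correct (V:=R_CompleteNormedModule)); auto.
  apply (is_RInt_scal w). apply (RInt_correct (V:=R_CompleteNormedModule)); auto.
Qed.

Lemma cs_int (f g : R -> R) (n : nat) : cont f -> cont g ->
  (sqrt (RInt (fun x => gauss x * f x ^ 2) (- INR n) (INR n)) -
   sqrt (RInt (fun x => gauss x * g x ^ 2) (- INR n) (INR n)))^2
  <= RInt (fun x => gauss x * (f x - g x) ^ 2) (- INR n) (INR n).
Proof.
  intros Hf Hg.
  assert (Hn : - INR n <= INR n) by (pose proof (pos_INR n); lra).
  assert (Hgc : cont gauss) by exact gauss_cont.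
  set (u := fun x => gauss x * f x ^ 2).
  set (v := fun x => gauss x * (f x * g x)).
  set (w := fun x => gauss x * g x ^ 2).
  assert (eu : ex_RInt u (- INR n) (INR n)) by (apply cont_ex, cont_mul, cont_sq; auto).
  assert (ev : ex_RInt v (- INR n) (INR n)) by (apply cont_ex, cont_mul, cont_mul; auto).
  assert (ew : ex_RInt w (- INR n) (INR n)) by (apply cont_ex, cont_mul, cont_sq; auto).
  assert (Hq : forall l, RInt (fun x => gauss x * (l * f x - g x) ^ 2) (- INR n) (INR n)
     = l^2 * RInt u (- INR n) (INR n) + (-2 * l) * RInt v (- INR n) (INR n) + 1 * RInt w (- INR n) (INR n)).
  { intros l. rewrite <- RInt_lin3 by auto. apply RInt_ext. intros x _. unfold u, v, w. apply Rminus_diag_uniq. ring. }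
  assert (Hpos : forall l, 0 <= RInt (fun x => gauss x * (l * f x - g x) ^ 2) (- INR n) (INR n)).
  { intros l. apply RInt_ge_0; auto.
    apply cont_ex. apply cont_mul; auto. apply cont_sq, cont_minus; auto. apply cont_mul; auto. apply cont_const.
    intros x _. pose proof (gauss_pos x). apply Rmult_le_pos. lra. apply pow2_ge_0. }
  assert (HA : 0 <= RInt u (- INR n) (INR n)).
  { apply RInt_ge_0; auto. intros x _. pose proof (gauss_pos x). unfold u. apply Rmult_le_pos. lra. apply pow2_ge_0. }
  assert (HB : 0 <= RInt w (- INR n) (INR n)).
  { apply RInt_ge_0; auto. intros x _. pose proof (gauss_pos x). unfold w. apply Rmult_le_pos. lra. apply pow2_ge_0. }
  pose proof (cs_alg _ _ (RInt v (- INR n) (INR n)) HA HB) as K.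
  fold u w. eapply Rle_trans. apply K.
  - intros l. pose proof (Hpos l). rewrite Hq in H. lra.
  - pose proof (Hq 1). 
    replace (RInt (fun x => gauss x * (f x - g x) ^ 2) (- INR n) (INR n)) with
      (RInt (fun x => gauss x * (1 * f x - g x) ^ 2) (- INR n) (INR n)).
    rewrite H. lra. apply RInt_ext. intros x _. apply Rminus_diag_uniq. ring.
Qed.

Lemma g1 x : gauss x * (1 + Rabs x) <= 32 / (1 + x^2).
Proof.
  pose proof (gauss_rat x ((1 + Rabs x)/2)). pose proof (Rabs_pos x).
  assert (Rabs ((1 + Rabs x) / 2) <= 1 + x^2).
  { rewrite Rabs_pos_eq by lra. rewrite <- (pow2_abs x). pose proof (pow2_ge_0 (Rabs x - 1)). nra. }
  specialize (H H1). rewrite Rabs_pos_eq in H by lra.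
  assert (0 < 1 + x^2) by nra.
  replace (32 / (1 + x^2)) with (2 * (16 / (1 + x^2))) by (field; lra). lra.
Qed.

Lemma g2 x : gauss x * (1 + Rabs x)^2 <= 32 / (1 + x^2).
Proof.
  pose proof (gauss_rat x ((1 + Rabs x)^2/2)). pose proof (Rabs_pos x).
  assert (Rabs ((1 + Rabs x)^2 / 2) <= 1 + x^2).
  { rewrite Rabs_pos_eq by nra. rewrite <- (pow2_abs x). pose proof (pow2_ge_0 (Rabs x - 1)). nra. }
  specialize (H H1). rewrite Rabs_pos_eq in H by nra.
  assert (0 < 1 + x^2) by nra.
  replace (32 / (1 + x^2)) with (2 * (16 / (1 + x^2))) by (field; lra). lra.
Qed.

Lemma g0 x : gauss x <= 16 / (1 + x^2).
Proof.
  pose proof (gauss_rat x 1). rewrite Rabs_R1, Rmult_1_r in H. apply H. nra.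
Qed.

Lemma contP S t h w : cont (fun x => gauss x * PhiP S (t * x + h) w).
Proof.
  apply cont_mul. exact gauss_cont. intros x.
  apply (continuous_comp (fun x => t * x + h) (fun y => PhiP S y w)).
  apply (cont_plus (fun x => t * x) (fun _ => h)). apply cont_mul. apply cont_const. apply cont_id. apply cont_const.
  apply PhiP_cont.
Qed.
Lemma contQ1 S t h w : cont (fun x => PhiQ S (t * x + h) w).
Proof.
  intros x.
  apply (continuous_comp (fun x => t * x + h) (fun y => PhiQ S y w)).
  apply (cont_plus (fun x => t * x) (fun _ => h)). apply cont_mul. apply cont_const. apply cont_id. apply cont_const.
  apply PhiQ_cont.
Qed.
Lemma contQ S t h w : cont (fun x => gauss x * PhiQ S (t * x + h) w ^ 2).
Proof. apply cont_mul. exact gauss_cont. apply cont_sq, contQ1. Qed.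

Lemma diffy t t' h x : Rabs ((t * x + h) - (t' * x + h)) = Rabs x * Rabs (t - t').
Proof. rewrite <- Rabs_mult. f_equal. ring. Qed.

Section Est.
Variable S : nat.
Hypothesis HS : (1 <= S)%nat.
Variables t w t' w' h : R.
Variable n : nat.
Let X := Rabs (t - t') + Rabs (w - w').
Let s := INR S.

Lemma estP : Rabs (RInt (fun x => gauss x * PhiP S (t * x + h) w) (- INR n) (INR n)
  - RInt (fun x => gauss x * PhiP S (t' * x + h) w') (- INR n) (INR n)) <= 32 * Lc S * X * PI.
Proof.
  rewrite <- (RInt_minus (V:=R_CompleteNormedModule)); try apply cont_ex, contP.
  apply master.
  - intros x. apply (cont_minus (fun x => gauss x * PhiP S (t * x + h) w) (fun x => gauss x * PhiP S (t' * x + h) w')); apply contP.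
  - intros x. simpl. unfold minus, plus, opp; simpl.
    replace (gauss x * PhiP S (t * x + h) w + - (gauss x * PhiP S (t' * x + h) w'))
      with (gauss x * (PhiP S (t * x + h) w - PhiP S (t' * x + h) w')) by ring.
    rewrite Rabs_mult, (Rabs_pos_eq (gauss x)) by (apply Rlt_le, gauss_pos).
    pose proof (lipP S HS (t * x + h) w (t' * x + h) w') as L. rewrite diffy in L.
    pose proof (g1 x). pose proof (gauss_pos x). assert (0 <= Lc S) by (unfold Lc; pose proof (pow_le (INR S) 4 (pos_INR S)); lra).
    pose proof (Rabs_pos x). pose proof (Rabs_pos (t - t')). pose proof (Rabs_pos (w - w')).
    assert (Rabs x * Rabs (t - t') + Rabs (w - w') <= (1 + Rabs x) * X) by (unfold X; nra).
    apply Rle_trans with (gauss x * (Lc S * ((1 + Rabs x) * X))).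
    apply Rmult_le_compat_l. lra. eapply Rle_trans. apply L. apply Rmult_le_compat_l; lra.
    assert (0 <= X) by (unfold X; lra).
    assert (Lc S * X * (gauss x * (1 + Rabs x)) <= Lc S * X * (32/(1+x^2))) by (apply Rmult_le_compat_l; nra).
    assert (Lc S * X * (32/(1+x^2)) = 32 * Lc S * X / (1+x^2)) by (field; nra).
    assert (gauss x * (Lc S * ((1 + Rabs x) * X)) = Lc S * X * (gauss x * (1 + Rabs x))) by ring.
    replace (1 + x * (x * 1)) with (1 + x^2) by ring.
    lra.
Qed.

Lemma Lc_pos : 0 <= Lc S.
Proof. unfold Lc; pose proof (pow_le (INR S) 4 (pos_INR S)); lra. Qed.

Lemma pw_diffQ x : Rabs (PhiQ S (t * x + h) w - PhiQ S (t' * x + h) w') <= Lc S * ((1 + Rabs x) * X).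
Proof.
  pose proof (lipQ S HS (t * x + h) w (t' * x + h) w') as L. rewrite diffy in L.
  pose proof Lc_pos.
  pose proof (Rabs_pos x). pose proof (Rabs_pos (t - t')). pose proof (Rabs_pos (w - w')).
  assert (Rabs x * Rabs (t - t') + Rabs (w - w') <= (1 + Rabs x) * X) by (unfold X; nra).
  eapply Rle_trans. apply L. apply Rmult_le_compat_l; lra.
Qed.

Lemma estQ : Rabs (RInt (fun x => gauss x * PhiQ S (t * x + h) w ^ 2) (- INR n) (INR n)
  - RInt (fun x => gauss x * PhiQ S (t' * x + h) w' ^ 2) (- INR n) (INR n)) <= 64 * s * Lc S * X * PI.
Proof.
  rewrite <- (RInt_minus (V:=R_CompleteNormedModule)); try apply cont_ex, contQ.
  replace (64 * s * Lc S * X * PI) with ((64 * s * Lc S * X) * PI) by ring.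
  apply master.
  - intros x. apply (cont_minus (fun x => gauss x * PhiQ S (t * x + h) w ^ 2) (fun x => gauss x * PhiQ S (t' * x + h) w' ^ 2)); apply contQ.
  - intros x. simpl. unfold minus, plus, opp; simpl.
    set (m := PhiQ S (t * x + h) w). set (m' := PhiQ S (t' * x + h) w').
    replace (gauss x * (m * (m * 1)) + - (gauss x * (m' * (m' * 1))))
      with (gauss x * ((m - m') * (m + m'))) by ring.
    rewrite !Rabs_mult, (Rabs_pos_eq (gauss x)) by (apply Rlt_le, gauss_pos).
    pose proof (pw_diffQ x) as L. fold m m' in L.
    pose proof (PhiQ_bound S (t * x + h) w). pose proof (PhiQ_bound S (t' * x + h) w'). fold m m' s in H, H0.
    assert (Hs : Rabs (m + m') <= 2 * s) by (eapply Rle_trans; [apply Rabs_triang | lra]).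
    pose proof (g1 x). pose proof (gauss_pos x). pose proof Lc_pos.
    pose proof (Rabs_pos x). pose proof (Rabs_pos (m - m')). pose proof (Rabs_pos (m + m')).
    assert (0 <= X) by (unfold X; pose proof (Rabs_pos (t - t')); pose proof (Rabs_pos (w - w')); lra).
    assert (gauss x * (Rabs (m - m') * Rabs (m + m')) <= gauss x * (Lc S * ((1 + Rabs x) * X) * (2 * s))).
    { apply Rmult_le_compat_l. lra. apply Rmult_le_compat; lra. }
    assert (2 * s * Lc S * X * (gauss x * (1 + Rabs x)) <= 2 * s * Lc S * X * (32/(1+x^2))).
    { apply Rmult_le_compat_l. unfold s. pose proof (pos_INR S). nra. auto. }
    assert (2 * s * Lc S * X * (32/(1+x^2)) = 64 * s * Lc S * X / (1+x^2)) by (field; nra).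
    assert (gauss x * (Lc S * ((1 + Rabs x) * X) * (2 * s)) = 2 * s * Lc S * X * (gauss x * (1 + Rabs x))) by ring.
    replace (1 + x * (x * 1)) with (1 + x^2) by ring.
    lra.
Qed.

Lemma estE : RInt (fun x => gauss x * (PhiQ S (t * x + h) w - PhiQ S (t' * x + h) w') ^ 2) (- INR n) (INR n)
   <= 32 * (Lc S)^2 * X^2 * PI.
Proof.
  eapply Rle_trans. apply Rle_abs.
  apply master.
  - apply cont_mul. exact gauss_cont. apply cont_sq. apply cont_minus; apply contQ1.
  - intros x.
    set (m := PhiQ S (t * x + h) w). set (m' := PhiQ S (t' * x + h) w').
    pose proof (pw_diffQ x) as L. fold m m' in L.
    pose proof (g2 x). pose proof (gauss_pos x). pose proof Lc_pos.
    pose proof (Rabs_pos x). pose proof (Rabs_pos (m - m')).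
    assert (0 <= X) by (unfold X; pose proof (Rabs_pos (t - t')); pose proof (Rabs_pos (w - w')); lra).
    rewrite Rabs_pos_eq by (apply Rmult_le_pos; [lra | apply pow2_ge_0]).
    rewrite <- (pow2_abs (m - m')).
    assert (Rabs (m - m') ^ 2 <= (Lc S * ((1 + Rabs x) * X))^2) by (apply pow_incr; lra).
    assert (gauss x * Rabs (m - m') ^ 2 <= gauss x * (Lc S * ((1 + Rabs x) * X))^2) by (apply Rmult_le_compat_l; lra).
    assert ((Lc S)^2 * X^2 * (gauss x * (1 + Rabs x)^2) <= (Lc S)^2 * X^2 * (32/(1+x^2))).
    { apply Rmult_le_compat_l. nra. auto. }
    assert ((Lc S)^2 * X^2 * (32/(1+x^2)) = 32 * (Lc S)^2 * X^2 / (1+x^2)) by (field; nra).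
    assert (gauss x * (Lc S * ((1 + Rabs x) * X))^2 = (Lc S)^2 * X^2 * (gauss x * (1 + Rabs x)^2)) by ring.
    lra.
Qed.
End Est.

Section Bnd.
Variable S : nat.
Variables t w h : R.
Variable n : nat.

Lemma bndP : Rabs (RInt (fun x => gauss x * PhiP S (t * x + h) w) (- INR n) (INR n)) <= 16 * INR S ^ 2 * PI.
Proof.
  apply master. apply contP. intros x.
  pose proof (PhiP_bound S (t * x + h) w). pose proof (g0 x). pose proof (gauss_pos x).
  rewrite Rabs_pos_eq by nra.
  assert (0 < 1 + x^2) by nra.
  replace (16 * INR S ^ 2 / (1 + x^2)) with (INR S ^ 2 * (16 / (1 + x^2))) by (field; lra).
  rewrite Rmult_comm. apply Rmult_le_compat; lra.
Qed.

Lemma bndQ : Rabs (RInt (fun x => gauss x * PhiQ S (t * x + h) w ^ 2) (- INR n) (INR n)) <= 16 * INR S ^ 2 * PI.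
Proof.
  apply master. apply contQ. intros x.
  pose proof (PhiQ_bound S (t * x + h) w). pose proof (g0 x). pose proof (gauss_pos x).
  assert (PhiQ S (t * x + h) w ^ 2 <= INR S ^ 2).
  { rewrite <- pow2_abs. apply pow_incr. split. apply Rabs_pos. auto. }
  rewrite Rabs_pos_eq by (apply Rmult_le_pos; [lra | apply pow2_ge_0]).
  assert (0 < 1 + x^2) by nra.
  replace (16 * INR S ^ 2 / (1 + x^2)) with (INR S ^ 2 * (16 / (1 + x^2))) by (field; lra).
  rewrite Rmult_comm. apply Rmult_le_compat; try lra. apply pow2_ge_0.
Qed.

Lemma posQ : 0 <= RInt (fun x => gauss x * PhiQ S (t * x + h) w ^ 2) (- INR n) (INR n).
Proof.
  apply RInt_ge_0. pose proof (pos_INR n); lra. apply cont_ex, contQ.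
  intros x _. pose proof (gauss_pos x). apply Rmult_le_pos. lra. apply pow2_ge_0.
Qed.
End Bnd.

Lemma Zden_eq S b D h p q x : Zden S b D h p q x = Zf S (sqrt q * b * x + h) (D + b^2/2*(p-q)).
Proof. unfold Zden, Zf, Cf. f_equal. apply sum_ext. intros. unfold fld, efac. ring. Qed.
Lemma numP_eq S b D h p q x : numP S b D h p q x = Cf S 2 (sqrt q * b * x + h) (D + b^2/2*(p-q)).
Proof. unfold numP, Cf. apply sum_ext. intros. unfold fld, efac. ring. Qed.
Lemma numQ_eq S b D h p q x : numQ S b D h p q x = Sf S 1 (sqrt q * b * x + h) (D + b^2/2*(p-q)).
Proof. unfold numQ, Sf. apply sum_ext. intros. unfold fld, efac. ring. Qed.

Lemma sol_lim S b D h p q : is_solution S b D h p q ->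
  is_lim_seq (fun n => RInt (fun x => gauss x * PhiP S (sqrt q * b * x + h) (D + b^2/2*(p-q))) (- INR n) (INR n)) p /\
  is_lim_seq (fun n => RInt (fun x => gauss x * PhiQ S (sqrt q * b * x + h) (D + b^2/2*(p-q)) ^ 2) (- INR n) (INR n)) q.
Proof.
  intros [H1 H2]. split.
  - apply gen_lim in H1. eapply is_lim_seq_ext. 2: exact H1. intros n. apply RInt_ext. intros x _.
    unfold PhiP. rewrite numP_eq, Zden_eq. reflexivity.
  - apply gen_lim in H2. eapply is_lim_seq_ext. 2: exact H2. intros n. apply RInt_ext. intros x _.
    unfold PhiQ. rewrite numQ_eq, Zden_eq. reflexivity.
Qed.

Lemma pair_est S b b' D h p q p' q' : (1 <= S)%nat ->
  is_solution S b D h p q -> is_solution S b' D h p' q' ->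
  let X := Rabs (sqrt q * b - sqrt q' * b') + Rabs ((D + b^2/2*(p-q)) - (D + b'^2/2*(p'-q'))) in
  Rabs (p - p') <= 128 * Lc S * X /\ Rabs (q - q') <= 256 * INR S * Lc S * X /\
  Rabs (sqrt q - sqrt q') <= 12 * Lc S * X /\
  0 <= q /\ q <= 64 * INR S ^ 2 /\ Rabs p <= 64 * INR S ^ 2 /\
  0 <= q' /\ q' <= 64 * INR S ^ 2 /\ Rabs p' <= 64 * INR S ^ 2.
Proof.
  intros HS H1 H2 X.
  destruct (sol_lim _ _ _ _ _ _ H1) as [LP LQ].
  destruct (sol_lim _ _ _ _ _ _ H2) as [LP' LQ'].
  pose proof PI_4 as Hpi. pose proof PI_RGT_0.
  assert (Hs : 0 <= INR S) by apply pos_INR.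
  assert (HL : 0 <= Lc S) by (unfold Lc; pose proof (pow_le (INR S) 4 Hs); lra).
  assert (HX : 0 <= X) by (unfold X; pose proof (Rabs_pos (sqrt q * b - sqrt q' * b'));
     pose proof (Rabs_pos ((D + b^2/2*(p-q)) - (D + b'^2/2*(p'-q')))); lra).
  assert (Hs2 : 0 <= INR S ^ 2) by (apply pow_le; lra).
  assert (Hq : 0 <= q) by (apply (lim_ge0 _ _ LQ); intros; apply posQ).
  assert (Hq' : 0 <= q') by (apply (lim_ge0 _ _ LQ'); intros; apply posQ).
  assert (Bq : Rabs q <= 16 * INR S ^ 2 * PI) by (apply (lim_bound _ _ _ LQ); intros; apply bndQ).
  assert (Bq' : Rabs q' <= 16 * INR S ^ 2 * PI) by (apply (lim_bound _ _ _ LQ'); intros; apply bndQ).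
  assert (Bp : Rabs p <= 16 * INR S ^ 2 * PI) by (apply (lim_bound _ _ _ LP); intros; apply bndP).
  assert (Bp' : Rabs p' <= 16 * INR S ^ 2 * PI) by (apply (lim_bound _ _ _ LP'); intros; apply bndP).
  assert (DP : Rabs (p - p') <= 32 * Lc S * X * PI).
  { apply (lim_bound _ _ _ (is_lim_seq_minus' _ _ _ _ LP LP')). intros n. apply estP. auto. }
  assert (DQ : Rabs (q - q') <= 64 * INR S * Lc S * X * PI).
  { apply (lim_bound _ _ _ (is_lim_seq_minus' _ _ _ _ LQ LQ')). intros n. apply estQ. auto. }
  assert (DS : Rabs (sqrt q - sqrt q') <= 12 * Lc S * X).
  { apply (lim_bound _ _ _ (is_lim_seq_minus' _ _ _ _
       (is_lim_seq_continuous sqrt _ _ (continuity_pt_sqrt _ Hq) LQ)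
       (is_lim_seq_continuous sqrt _ _ (continuity_pt_sqrt _ Hq') LQ'))).
    intros n.
    pose proof (cs_int (fun x => PhiQ S (sqrt q * b * x + h) (D + b^2/2*(p-q)))
                       (fun x => PhiQ S (sqrt q' * b' * x + h) (D + b'^2/2*(p'-q'))) n
                       (contQ1 _ _ _ _) (contQ1 _ _ _ _)) as C.
    pose proof (estE S HS (sqrt q * b) (D + b^2/2*(p-q)) (sqrt q' * b') (D + b'^2/2*(p'-q')) h n) as E.
    fold X in E.
    set (a := sqrt (RInt _ (- INR n) (INR n)) - sqrt (RInt _ (- INR n) (INR n))) in *.
    assert (a^2 <= 32 * Lc S ^ 2 * X ^ 2 * PI) by lra.
    assert (0 <= (Lc S * X)^2) by apply pow2_ge_0.
    assert (a^2 <= (12 * Lc S * X)^2) by nra.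
    assert (0 <= 12 * Lc S * X) by nra.
    apply Rabs_le. nra. }
  repeat split; try lra.
  - apply Rle_trans with (32 * Lc S * X * PI); auto.
    assert (0 <= Lc S * X) by (apply Rmult_le_pos; lra). nra.
  - apply Rle_trans with (64 * INR S * Lc S * X * PI); auto.
    assert (0 <= INR S * Lc S * X) by (apply Rmult_le_pos; [apply Rmult_le_pos|]; lra). nra.
  - apply Rabs_le_between in Bq. nra.
  - nra.
  - apply Rabs_le_between in Bq'. nra.
  - nra.
Qed.

Theorem lemma6 (S : nat) : (1 <= S)%nat ->
  exists K beta_hat : R, 0 < K /\ 0 < beta_hat /\
    forall (beta D h : R) (N : nat) (p q pm qm : R),
      0 <= beta -> beta < beta_hat -> (2 <= N)%nat ->
      is_unique_solution S beta D h p q ->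
      is_unique_solution S (beta * sqrt ((INR N - 1) / INR N)) D h pm qm ->
      Rabs (p - pm) <= K / INR N /\ Rabs (q - qm) <= K / INR N.
Proof.
  intros HS. rename S into SS.
  assert (Hs1 : 1 <= INR SS) by (apply (le_INR 1); lia).
  set (s := INR SS) in *.
  assert (HL : 2 <= Lc SS).
  { unfold Lc. fold s. assert (1 <= s^4). { replace 1 with (1^4) by ring. apply pow_incr. lra. } lra. }
  set (L := Lc SS) in *.
  assert (HsL : 2 <= s * L) by nra.
  exists (36864 * s^3 * L), (1 / (400 * s * L)).
  split. { assert (1 <= s^3) by (replace 1 with (1^3) by ring; apply pow_incr; lra). nra. }
  split. { apply Rdiv_lt_0_compat; lra. }
  intros beta D h N p q pm qm Hb0 Hbh HN [Sol1 _] [Sol2 _].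
  assert (HnN : 2 <= INR N) by (apply (le_INR 2); lia).
  set (nN := INR N) in *.
  set (r := sqrt ((nN - 1) / nN)) in *.
  set (b' := beta * r) in *.
  destruct (pair_est SS beta b' D h p q pm qm HS Sol1 Sol2) as [DP [DQ [DS [Hq [Hq2 [Hp [Hqm [Hqm2 Hpm]]]]]]]].
  fold s L in DP, DQ, DS, Hq2, Hp, Hqm2, Hpm.
  set (dt := Rabs (sqrt q * beta - sqrt qm * b')) in *.
  set (dw := Rabs (D + beta ^ 2 / 2 * (p - q) - (D + b' ^ 2 / 2 * (pm - qm)))) in *.
  set (X := dt + dw) in *.
  set (e := / nN).
  assert (He : 0 < e <= 1/2).
  { unfold e. split. apply Rinv_0_lt_compat; lra.
    apply Rmult_le_reg_r with nN. lra. rewrite Rinv_l by lra. lra. }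
  assert (Hr2 : r * r = 1 - e).
  { unfold r. rewrite sqrt_sqrt. unfold e. field. lra.
    apply Rdiv_le_0_compat; lra. }
  assert (Hr0 : 0 <= r) by apply sqrt_pos.
  assert (Hr1 : r <= 1) by nra.
  assert (H1r : 1 - r <= e) by nra.
  assert (Hsq : sqrt q <= 8 * s).
  { replace (8 * s) with (sqrt ((8 * s)^2)). apply sqrt_le_1_alt. nra.
    apply sqrt_pow2. lra. }
  assert (Hsq0 : 0 <= sqrt q) by apply sqrt_pos.
  assert (HbsL : beta * (s * L) <= 1 / 400).
  { assert (P : 0 < 400*s*L) by nra.
    assert (Q : beta * (400*s*L) < 1/(400*s*L) * (400*s*L)) by (apply Rmult_lt_compat_r; lra).
    replace (1/(400*s*L) * (400*s*L)) with 1 in Q by (field; lra). nra. }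
  assert (Hb1 : beta <= 1 / 800) by nra.
  assert (HX0 : 0 <= X) by (unfold X, dt, dw; pose proof (Rabs_pos (sqrt q * beta - sqrt qm * b')); 
     pose proof (Rabs_pos (D + beta ^ 2 / 2 * (p - q) - (D + b' ^ 2 / 2 * (pm - qm)))); lra).
  assert (Hdt : dt <= 8 * s * beta * e + beta * (12 * L * X)).
  { unfold dt. replace (sqrt q * beta - sqrt qm * b') with (sqrt q * beta * (1 - r) + beta * r * (sqrt q - sqrt qm))
      by (unfold b'; ring).
    eapply Rle_trans. apply Rabs_triang. rewrite !Rabs_mult.
    rewrite (Rabs_pos_eq (sqrt q)), (Rabs_pos_eq beta), (Rabs_pos_eq (1 - r)), (Rabs_pos_eq r) by lra.
    assert (sqrt q * beta * (1 - r) <= 8 * s * beta * e).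
    { apply Rmult_le_compat; try nra. }
    assert (beta * r * Rabs (sqrt q - sqrt qm) <= beta * (12 * L * X)).
    { pose proof (Rabs_pos (sqrt q - sqrt qm)). apply Rle_trans with (beta * Rabs (sqrt q - sqrt qm)).
      apply Rmult_le_compat_r. lra. nra. apply Rmult_le_compat_l; lra. }
    lra. }
  assert (Hdw : dw <= beta^2 * e * 64 * s^2 + beta^2 * (64 * L * X + 128 * s * L * X)).
  { unfold dw.
    replace (D + beta ^ 2 / 2 * (p - q) - (D + b' ^ 2 / 2 * (pm - qm))) with
      (beta^2 * e / 2 * (p - q) + (beta * r)^2 / 2 * ((p - pm) - (q - qm))).
    2: { unfold b'. replace ((beta * r)^2) with (beta^2 * (r * r)) by ring. rewrite Hr2. field. }
    eapply Rle_trans. apply Rabs_triang. rewrite !Rabs_mult.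
    assert (Hb2 : 0 <= beta^2) by nra.
    rewrite (Rabs_pos_eq (beta^2 * e / 2)) by nra.
    rewrite (Rabs_pos_eq ((beta * r)^2 / 2)) by nra.
    assert (Rabs (p - q) <= 128 * s^2).
    { eapply Rle_trans. apply Rabs_triang. rewrite Rabs_Ropp. rewrite (Rabs_pos_eq q) by lra. lra. }
    assert (Rabs ((p - pm) - (q - qm)) <= 128 * L * X + 256 * s * L * X).
    { eapply Rle_trans. apply Rabs_triang. rewrite Rabs_Ropp. lra. }
    assert ((beta * r)^2 <= beta^2) by nra.
    assert (beta ^ 2 * e / 2 * Rabs (p - q) <= beta ^ 2 * e / 2 * (128 * s^2)) by
      (apply Rmult_le_compat_l; nra).
    assert ((beta * r) ^ 2 / 2 * Rabs (p - pm - (q - qm)) <= beta^2 / 2 * (128 * L * X + 256 * s * L * X)).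
    { apply Rmult_le_compat; try nra. apply Rabs_pos. }
    nra. }
  assert (Hth : beta * (12 * L) + beta^2 * (64 * L + 128 * s * L) <= 1/2).
  { assert (beta * L <= 1/400) by nra.
    assert (beta * (s * L) * beta <= 1/400 * (1/800)) by (apply Rmult_le_compat; nra).
    assert (beta * L * beta <= 1/400 * (1/800)) by (apply Rmult_le_compat; nra).
    nra. }
  assert (HXb : X <= 2 * (8 * s * beta + 64 * s^2 * beta^2) * e).
  { assert (X <= (8 * s * beta + 64 * s^2 * beta^2) * e + (beta * (12 * L) + beta^2 * (64 * L + 128 * s * L)) * X)
      by (assert (E1: 8*s*beta*e + beta*(12*L*X) + (beta^2*e*64*s^2 + beta^2*(64*L*X + 128*s*L*X)) = (8*s*beta + 64*s^2*beta^2)*e + (beta*(12*L) + beta^2*(64*L + 128*s*L))*X) by ring;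
          assert (X = dt + dw) by reflexivity; lra).
    assert ((beta * (12 * L) + beta^2 * (64 * L + 128 * s * L)) * X <= 1/2 * X) by (apply Rmult_le_compat_r; lra).
    lra. }
  assert (HXe : X <= 144 * s^2 * e).
  { assert (8 * s * beta + 64 * s^2 * beta^2 <= 72 * s^2) by nra. nra. }
  assert (Hs3 : s^2 <= s^3) by (simpl; nra).
  replace (36864 * s ^ 3 * L / nN) with (36864 * s ^ 3 * L * e) by (unfold e; field; lra).
  split.
  - eapply Rle_trans. apply DP.
    assert (128 * L * X <= 128 * L * (144 * s^2 * e)) by (apply Rmult_le_compat_l; nra).
    assert (0 <= L * e * s^2) by (apply Rmult_le_pos; [nra | nra]).
    nra.
  - eapply Rle_trans. apply DQ.
    assert (256 * s * L * X <= 256 * s * L * (144 * s^2 * e)) by (apply Rmult_le_compat_l; nra).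
    assert (s * s^2 = s^3) by ring.
    nra.
Qed.
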